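(* Let $\mathcal{K}'\subseteq\mathcal{K}\subseteq\mathbb{R}^d$ be two convex sets (compact, with nonempty interior). Let $\beta,\gamma$ be reals with $\beta>\gamma>1$ and $\beta>d$, and let $\alpha\ge 2(\gamma+1)\beta^2\sqrt{d}$. Let $G=\mathrm{grid}(\beta\mathcal{K}'\cap\mathcal{K},\alpha)$. Then: (1) for every $x\in\mathcal{K}'$ there exists $x_g\in G$ such that $x_g+\gamma(x_g-x)\in\frac{1}{2\beta}\mathcal{K}'$; (2) for every $x\in\mathcal{K}\setminus\mathcal{K}'$ there exists $x_g\in G$ such that $x_g+\frac{\gamma}{\mu(x,\mathcal{K}')}(x_g-x)\in\frac{1}{2\beta}\mathcal{K}'$.
   Context: For a convex compact set $C\subseteq\mathbb{R}^d$ with nonempty interior, let $\mathcal{E}_C=\{x_0+Vu:\|u\|_2\le1\}$ be its minimum volume enclosing ellipsoid (John ellipsoid), with center $x_0$ and $V$ invertible. The Minkowski distance of $x\in\mathbb{R}^d$ to $C$ is $\mu(x,C)=d\sqrt{(x-x_0)^\top(VV^\top)^{-1}(x-x_0)}$ (i.e. the gauge of $x-x_0$ with respect to the ellipsoid $\mathcal{E}_C$ shrunk by factor $1/d$ about its center). For $b>0$, the scaled set is $bC=\{y\in\mathbb{R}^d:\mu(y,C)\le b\}$. The grid $\mathrm{grid}(C,\alpha)$ is constructed as follows: let $\mathcal{E}'$ be the minimum volume enclosing ellipsoid of $C$, $\mathcal{E}=\frac1d\mathcal{E}'$ (shrunk about its center), let $A$ be the (affine) invertible transformation mapping $\mathcal{E}$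 onto the Euclidean ball $B_\alpha(0)$ of radius $\alpha$ centered at $0$, and output $\mathrm{grid}(C,\alpha)=A^{-1}(\mathbb{Z}^d)\cap C$. *)

(* Defs.v *)
From mathcomp Require Import all_boot all_order all_algebra.
From mathcomp Require Import all_classical all_reals all_analysis.
Import Order.TTheory GRing.Theory Num.Theory.
Import numFieldNormedType.Exports.
Set Implicit Arguments. Unset Strict Implicit. Unset Printing Implicit Defensive.
Local Open Scope ring_scope.
Local Open Scope classical_set_scope.

Section Defs.
Variables (R : realType) (d : nat).

Definition enorm (u : 'cV[R]_d) : R := Num.sqrt (\sum_(i < d) (u i 0) ^+ 2).

Definition convex_set (C : set 'cV[R]_d) : Prop :=
  forall x y t, C x -> C y -> 0 <= t <= 1 -> C (t *: x + (1 - t) *: y).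

Definition convex_body (C : set 'cV[R]_d) : Prop :=
  convex_set C /\ compact C /\ interior C !=set0.

Definition ellipsoid (x0 : 'cV[R]_d) (V : 'M[R]_d) : set 'cV[R]_d :=
  [set x | exists u : 'cV[R]_d, enorm u <= 1 /\ x = x0 + V *m u].

(* (x0, V) describes a minimum volume enclosing ellipsoid of C: V invertible,
   C inside the ellipsoid, and its volume (proportional to |det V|) is minimal
   among all enclosing ellipsoids. *)
Definition is_MVEE (C : set 'cV[R]_d) (x0 : 'cV[R]_d) (V : 'M[R]_d) : Prop :=
  V \in unitmx /\ C `<=` ellipsoid x0 V /\
  (forall (x1 : 'cV[R]_d) (V1 : 'M[R]_d), V1 \in unitmx ->
     C `<=` ellipsoid x1 V1 -> `|\det V| <= `|\det V1|).

(* Minkowski distance mu(x, C) where (x0, V) is the MVEE of C *)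
Definition mink (x0 : 'cV[R]_d) (V : 'M[R]_d) (x : 'cV[R]_d) : R :=
  d%:R * Num.sqrt (((x - x0)^T *m invmx (V *m V^T) *m (x - x0)) 0 0).

(* the scaled set bC = { y : mu(y, C) <= b } *)
Definition scaled (b : R) (x0 : 'cV[R]_d) (V : 'M[R]_d) : set 'cV[R]_d :=
  [set y | mink x0 V y <= b].

Definition grid_map (alpha : R) (x1 : 'cV[R]_d) (V1 : 'M[R]_d)
    (M : 'M[R]_d) (c : 'cV[R]_d) : Prop :=
  M \in unitmx /\
  (fun x => M *m x + c) @` ellipsoid x1 ((d%:R)^-1 *: V1)
    = [set y | enorm y <= alpha].

Definition grid_set (C : set 'cV[R]_d) (M : 'M[R]_d) (c : 'cV[R]_d)
    : set 'cV[R]_d :=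
  [set x | C x /\ forall i : 'I_d, (M *m x + c) i 0 \is a Num.int].

End Defs.

(* Main.v *)
Require Import Defs.
From mathcomp Require Import all_boot all_order all_algebra.
From mathcomp Require Import all_classical all_reals all_analysis.
From mathcomp Require Import ring lra.
Import Order.TTheory GRing.Theory Num.Theory.
Import numFieldNormedType.Exports.
Set Implicit Arguments. Unset Strict Implicit. Unset Printing Implicit Defensive.
Local Open Scope ring_scope.
Local Open Scope classical_set_scope.



Section Basics.
Variables (R : realType) (d : nat).
Implicit Types (u v w : 'cV[R]_d).

Definition dotv u v : R := \sum_(i < d) u i 0 * v i 0.

Lemma dotvC u v : dotv u v = dotv v u.
Proof. by apply: eq_bigr => i _; rewrite mulrC. Qed.
Lemma dotvDl u v w : dotv (u + v) w = dotv u w + dotv v w.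
Proof. by rewrite /dotv -big_split; apply: eq_bigr => i _; rewrite !mxE mulrDl. Qed.
Lemma dotvDr u v w : dotv w (u + v) = dotv w u + dotv w v.
Proof. by rewrite dotvC dotvDl !(dotvC w). Qed.
Lemma dotvZl k u v : dotv (k *: u) v = k * dotv u v.
Proof. by rewrite /dotv mulr_sumr; apply: eq_bigr => i _; rewrite !mxE mulrA. Qed.
Lemma dotvZr k u v : dotv u (k *: v) = k * dotv u v.
Proof. by rewrite dotvC dotvZl dotvC. Qed.
Lemma dotvNl u v : dotv (- u) v = - dotv u v.
Proof. by rewrite -scaleN1r dotvZl mulN1r. Qed.
Lemma dotvNr u v : dotv u (- v) = - dotv u v.
Proof. by rewrite dotvC dotvNl dotvC. Qed.
Lemma dotvBl u v w : dotv (u - v) w = dotv u w - dotv v w.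
Proof. by rewrite dotvDl dotvNl. Qed.
Lemma dotvBr u v w : dotv w (u - v) = dotv w u - dotv w v.
Proof. by rewrite dotvDr dotvNr. Qed.
Lemma dotv0l v : dotv 0 v = 0.
Proof. by rewrite /dotv big1 // => i _; rewrite mxE mul0r. Qed.
Lemma dotvv_ge0 u : 0 <= dotv u u.
Proof. by apply: sumr_ge0 => i _; rewrite -expr2 sqr_ge0. Qed.
Lemma dotvv_eq0 u : dotv u u = 0 -> u = 0.
Proof.
move=> /eqP; rewrite psumr_eq0; last by move=> i _; rewrite -expr2 sqr_ge0.
move=> /allP H; apply/matrixP => i j; rewrite ord1 mxE.
have := H i (mem_index_enum i); rewrite implyTb -expr2 sqrf_eq0 => /eqP ->//.
Qed.

Lemma enormE u : enorm u = Num.sqrt (dotv u u).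
Proof. by rewrite /enorm /dotv; congr Num.sqrt; apply: eq_bigr => i _; rewrite expr2. Qed.
Lemma enorm_ge0 u : 0 <= enorm u.
Proof. by rewrite enormE sqrtr_ge0. Qed.
Lemma enorm_sq u : enorm u ^+ 2 = dotv u u.
Proof. by rewrite enormE sqr_sqrtr // dotvv_ge0. Qed.
Lemma enorm0 : enorm (0 : 'cV[R]_d) = 0.
Proof. by rewrite enormE dotv0l sqrtr0. Qed.
Lemma enorm_eq0 u : enorm u = 0 -> u = 0.
Proof. by move=> h; apply: dotvv_eq0; rewrite -enorm_sq h expr0n. Qed.

Lemma enormZ k u : enorm (k *: u) = `|k| * enorm u.
Proof.
rewrite !enormE dotvZl dotvZr mulrA -expr2 sqrtrM ?sqr_ge0 //.
by rewrite sqrtr_sqr.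
Qed.
Lemma enormN u : enorm (- u) = enorm u.
Proof. by rewrite -scaleN1r enormZ normrN1 mul1r. Qed.

Lemma cauchy_schwarz u v : dotv u v <= enorm u * enorm v.
Proof.
have [a0|a0] := eqVneq (enorm u) 0.
  by rewrite (enorm_eq0 a0) dotv0l enorm0 mul0r.
have [b0|b0] := eqVneq (enorm v) 0.
  by rewrite (enorm_eq0 b0) dotvC dotv0l enorm0 mulr0.
have ha : 0 < enorm u by rewrite lt_def a0 enorm_ge0.
have hb : 0 < enorm v by rewrite lt_def b0 enorm_ge0.
have := dotvv_ge0 (enorm v *: u - enorm u *: v).
rewrite !(dotvBl, dotvBr, dotvZl, dotvZr) -!enorm_sq (dotvC v u).
set a := enorm u; set b := enorm v; set D := dotv u v => h.
have hab : 0 < a * b by rewrite mulr_gt0.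
have : 0 <= 2 * (a * b) * (a * b - D) by nra.
rewrite pmulr_rge0 ?mulr_gt0 //; lra.
Qed.

Lemma enormD u v : enorm (u + v) <= enorm u + enorm v.
Proof.
rewrite -(ler_pXn2r (n:=2)) // ?nnegrE ?addr_ge0 ?enorm_ge0 //.
rewrite enorm_sq dotvDl !dotvDr (dotvC v u) -!enorm_sq.
have := cauchy_schwarz u v; nra.
Qed.
Lemma enormB u v : enorm (u - v) <= enorm u + enorm v.
Proof. by rewrite -(enormN v) enormD. Qed.

End Basics.


Section Mink.
Variables (R : realType) (d : nat).
Implicit Types (u v w : 'cV[R]_d) (V : 'M[R]_d).

Lemma tr_mul00 u v : (u^T *m v) 0 0 = dotv u v.
Proof. by rewrite mxE; apply: eq_bigr => i _; rewrite mxE. Qed.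

Lemma invmx_VVt V : V \in unitmx -> invmx (V *m V^T) = (invmx V)^T *m invmx V.
Proof.
move=> hV.
have h1 : (V *m V^T) *m ((invmx V)^T *m invmx V) = 1%:M.
  rewrite mulmxA -(mulmxA V) -trmx_mul mulVmx // trmx1 mulmx1 mulmxV //.
have hu : V *m V^T \in unitmx by rewrite unitmx_mul unitmx_tr hV.
by rewrite -[RHS](mulKmx hu) h1 mulmx1.
Qed.

Lemma minkE x0 V y : V \in unitmx ->
  mink x0 V y = d%:R * enorm (invmx V *m (y - x0)).
Proof.
move=> hV; rewrite /mink invmx_VVt // mulmxA -trmx_mul.
by rewrite -mulmxA tr_mul00 enormE.
Qed.

Lemma ellipsoidP x0 V y : V \in unitmx ->
  ellipsoid x0 V y <-> enorm (invmx V *m (y - x0)) <= 1.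
Proof.
move=> hV; split.
  by move=> [u [hu ->]]; rewrite addrC addKr mulKmx.
move=> h; exists (invmx V *m (y - x0)); split => //.
by rewrite mulKVmx // addrC subrK.
Qed.

Lemma mulmxBr' V u v : V *m (u - v) = V *m u - V *m v.
Proof. by rewrite mulmxBr. Qed.

End Mink.


Section Det.
Variables (R : realType) (d : nat).
Implicit Types (u v w : 'cV[R]_d) (V : 'M[R]_d).

Lemma det_1_rank1 u v : \det (1%:M + u *m v^T) = 1 + (v^T *m u) 0 0.
Proof.
have E : (block_mx 1%:M 0 v^T 1%:M : 'M[R]_(d + 1)) *m
           block_mx (1%:M + u *m v^T) u 0 1%:M *m block_mx 1%:M 0 (- v^T) 1%:M
         = block_mx 1%:M u 0 (1%:M + v^T *m u).
  rewrite !mulmx_block !(mul1mx, mulmx1, mul0mx, mulmx0, add0r, addr0).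
  rewrite !(mulmxDl, mulmxDr, mulmxN, mulNmx, mul1mx, mulmx1, mulmxA).
  congr block_mx; rewrite ?addrK //.
  - by rewrite -opprD (addrC v^T) subrr.
  - by rewrite addrC.
have := congr1 determinant E.
rewrite !det_mulmx det_lblock det_ublock det_lblock det_ublock !det1 !mul1r mulr1.
rewrite mulr1 => ->; rewrite det_mx11 !mxE /=; congr (_ + _).
Qed.

Lemma det_rank1 (n : 'cV[R]_d) (k : R) :
  \det (1%:M + k *: (n *m n^T)) = 1 + k * dotv n n.
Proof.
by rewrite scalemxAl det_1_rank1 -scalemxAr mxE tr_mul00.
Qed.
End Det.


Section Real.
Variable (R : realType).

Lemma bernoulli_inv (y : R) (k : nat) : 0 <= y -> (1 + y) ^+ k * (1 - k%:R * y) <= 1.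
Proof.
move=> y0; elim: k => [|k IH]; first by rewrite expr0 mul0r subr0 mulr1.
rewrite exprSr -mulrA.
have h : (1 + y) * (1 - k.+1%:R * y) <= 1 - k%:R * y.
  have k0 : (0:R) <= k%:R by []. rewrite -natr1; nra.
have hp : 0 <= (1 + y) ^+ k by rewrite exprn_ge0 // addr_ge0.
apply: le_trans IH; exact: ler_wpM2l.
Qed.

Lemma cap_params (D s : R) (k : nat) : D = k%:R + 1 -> 0 <= s -> D * s < 1 ->
  exists a b : R, [/\ 0 < a, 0 < b, a * b ^+ k < 1 &
    forall x, -1 <= x -> x <= s ->
      (1 - x ^+ 2) * a ^+ 2 + (x - a + 1) ^+ 2 * b ^+ 2 <= a ^+ 2 * b ^+ 2].
Proof.
move=> hD s0 hDs.
have D1 : 1 <= D by rewrite hD lerDr.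
have D0 : 0 < D by lra.
set sig := 1 - s.
have s1 : s < 1 by nra.
have sig0 : 0 < sig by rewrite /sig; lra.
set g := 1 - D * s.
have g0 : 0 < g by rewrite /g; lra.
have g1 : g <= 1 by rewrite /g; nra.
set th := (1 + D * s) / (2 * D * sig).
have th0 : 0 < th by rewrite /th divr_gt0 //; [nra | rewrite !mulr_gt0].
set eps := g * sig / (8 + 2 * D * sig).
have den0 : 0 < 8 + 2 * D * sig by nra.
have eps0 : 0 < eps by rewrite /eps divr_gt0 // mulr_gt0.
have F1 : th * sig - s = g / (2 * D).
  rewrite /th /g /sig; field; do ?[apply/andP; split]; apply: lt0r_neq0; lra.
have thle : th <= 1 / (D * sig).
  have -> : th = (1 + D * s) / 2 * (1 / (D * sig)).
    rewrite /th; field; do ?[apply/andP; split]; apply: lt0r_neq0; lra.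
  apply: ler_piMl; first by rewrite divr_ge0 // ?mulr_ge0 //; lra.
  lra.
have F2 : eps * (2 * (1 / (D * sig)) + 1 / 2) = g / (4 * D).
  rewrite /eps /g /sig; field; do ?[apply/andP; split]; apply: lt0r_neq0; nra.
have F3 : th * sig >= s + 2 * th * eps + sig * eps / 2.
  have : eps * (2 * th + sig / 2) <= g / (4 * D).
    rewrite -F2; apply: ler_wpM2l; first exact: ltW.
    have : sig <= 1 by rewrite /sig; lra.
    lra.
  have : g / (4 * D) <= g / (2 * D).
    rewrite ler_pM2l // lef_pV2 ?posrE; nra.
  nra.
have sig1 : sig <= 1 by rewrite /sig; lra.
have Dsig : 0 <= D * sig by nra.
have gs : g * sig <= sig by nra.
have eps2' : eps <= sig / 8.
  rewrite /eps ler_pdivrMr //; nra.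
have eps1 : eps <= 1 / 8 by lra.
have eps2 : 2 * eps <= sig / 4 by lra.
have F4 : k%:R * th < 1.
  have -> : k%:R = D - 1 by lra.
  rewrite /th mulrA ltr_pdivrMr ?mulr_gt0 // mul1r /sig; nra.
exists (1 - eps), (1 + th * eps); split.
- lra.
- nra.
- have hb := bernoulli_inv k (ltW (mulr_gt0 th0 eps0)).
  have hpos : 0 < 1 - k%:R * (th * eps) by nra.
  have hbk : 0 <= (1 + th * eps) ^+ k by rewrite exprn_ge0 //; nra.
  have : (1 - eps) * (1 + th * eps) ^+ k <= (1 + th * eps) ^+ k * (1 - k%:R * (th * eps)) - (eps - k%:R * (th*eps)) * (1 + th * eps) ^+ k.
    nra.
  have : 0 < (eps - k%:R * (th * eps)) * (1 + th * eps) ^+ k.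
    apply: mulr_gt0; first nra.
    by rewrite exprn_gt0 //; nra.
  lra.
- move=> x hx1 hxs.
  set a := 1 - eps; set b := 1 + th * eps.
  have a0 : 0 < a by rewrite /a; lra.
  have C2 : a <= b ^+ 2 by rewrite /a /b; nra.
  have C3 : sig * a ^+ 2 <= (sig - 2 * eps) * b ^+ 2.
    have hb2 : 1 + 2 * (th * eps) <= b ^+ 2 by rewrite /b; nra.
    have : sig * a ^+ 2 <= (sig - 2 * eps) * (1 + 2 * (th * eps)).
      have E : (sig - 2 * eps) * (1 + 2 * (th * eps)) - sig * a ^+ 2
         = 2 * eps * (th * sig - s - 2 * th * eps - sig * eps / 2).
        by rewrite /a /sig; field.
      have : 0 <= 2 * eps * (th * sig - s - 2 * th * eps - sig * eps / 2).
        apply: mulr_ge0; lra.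
      lra.
    have : (sig - 2 * eps) * (1 + 2 * (th * eps)) <= (sig - 2 * eps) * b ^+ 2.
      apply: ler_wpM2l => //; lra.
    lra.
  set B := fun y => (1 - y) * a ^+ 2 + (y + 1 - 2 * a) * b ^+ 2.
  have Bm1 : B (-1) <= 0 by rewrite /B; nra.
  have Bs : B s <= 0 by rewrite /B; move: C3; rewrite /sig /a; nra.
  have Bx : (1 + s) * B x = (s - x) * B (-1) + (x + 1) * B s by rewrite /B; ring.
  have Bx0 : B x <= 0.
    have : (1 + s) * B x <= 0 by rewrite Bx; nra.
    have : 0 < 1 + s by lra.
    nra.
  have : (1 - x ^+ 2) * a ^+ 2 + (x - a + 1) ^+ 2 * b ^+ 2 - a ^+ 2 * b ^+ 2 = (x + 1) * B x.
    by rewrite /B; ring.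
  nra.
Qed.
End Real.


Section Cap.
Variables (R : realType) (d : nat).
Implicit Types (u v w : 'cV[R]_d) (V : 'M[R]_d).

Lemma nnT_mul (n u : 'cV[R]_d) : (n *m n^T) *m u = dotv n u *: n.
Proof.
rewrite -mulmxA; apply/matrixP => i j.
by rewrite !mxE big_ord1 (ord1 j) tr_mul00 mulrC.
Qed.

Lemma enorm_le1 u : enorm u <= 1 -> dotv u u <= 1.
Proof. by move=> h; rewrite -enorm_sq -(expr1n R 2) ler_pXn2r ?nnegrE ?enorm_ge0. Qed.

Lemma le1_enorm u : dotv u u <= 1 -> enorm u <= 1.
Proof. by move=> h; rewrite enormE -sqrtr1 ler_sqrt. Qed.

Lemma cap_ellipsoid (n : 'cV[R]_d) (s : R) : (0 < d)%N -> dotv n n = 1 ->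
  0 <= s -> d%:R * s < 1 ->
  exists (tau : R) (A : 'M[R]_d), [/\ A \in unitmx, `|\det A| < 1 &
   forall w, enorm w <= 1 -> dotv n w <= s ->
     exists u, enorm u <= 1 /\ w = tau *: n + A *m u].
Proof.
move=> hd hn s0 hs.
have hD : d%:R = (d.-1)%:R + 1 :> R by rewrite natr1 prednK.
have [a [b [a0 b0 hab hx]]] := cap_params hD s0 hs.
set A := b *: 1%:M + (a - b) *: (n *m n^T).
have hA : A = b *: (1%:M + ((a - b) / b) *: (n *m n^T)).
  rewrite /A scalerDr scalerA; congr (_ + _ *: _); field; by do ?[apply/andP; split]; apply: lt0r_neq0.
have detA : \det A = a * b ^+ d.-1.
  rewrite hA detZ det_rank1 hn mulr1.
  rewrite -{1}(prednK hd) exprS; field; by do ?[apply/andP; split]; apply: lt0r_neq0.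
have detA0 : 0 < \det A by rewrite detA mulr_gt0 // exprn_gt0.
exists (a - 1), A; split.
- by rewrite unitmxE unitfE; apply: lt0r_neq0.
- by rewrite gtr0_norm // detA.
move=> w hw hws.
set x := dotv n w.
have en : enorm n = 1 by rewrite enormE hn sqrtr1.
have hx1 : -1 <= x.
  have := cauchy_schwarz (- n) w; rewrite dotvNl enormN en mul1r -/x; lra.
have hnw := enorm_le1 hw.
set u := b^-1 *: (w - x *: n) + ((x - (a - 1)) / a) *: n.
have hnu : dotv n u = (x - (a - 1)) / a.
  rewrite /u dotvDr !dotvZr dotvBr dotvZr hn -/x; field; by do ?[apply/andP; split]; apply: lt0r_neq0.
exists u; split; last first.
  rewrite mulmxDl -scalemxAl mul1mx -scalemxAl nnT_mul hnu.
  apply/matrixP => i j; rewrite /u !mxE; field.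
  by do ?[apply/andP; split]; apply: lt0r_neq0.
apply: le1_enorm.
have E : dotv u u = (dotv w w - x ^+ 2) / b ^+ 2 + (x - (a - 1)) ^+ 2 / a ^+ 2.
  rewrite /u !(dotvDl, dotvDr, dotvZl, dotvZr, dotvBl, dotvBr, dotvNl, dotvNr) hn (dotvC w n) -/x.
  field; by do ?[apply/andP; split]; apply: lt0r_neq0.
rewrite E.
have key : (1 - x ^+ 2) / b ^+ 2 + (x - (a - 1)) ^+ 2 / a ^+ 2 <= 1.
  have -> : (1 - x ^+ 2) / b ^+ 2 + (x - (a - 1)) ^+ 2 / a ^+ 2 =
     ((1 - x ^+ 2) * a ^+ 2 + (x - a + 1) ^+ 2 * b ^+ 2) / (a ^+ 2 * b ^+ 2).
    field; by do ?[apply/andP; split]; apply: lt0r_neq0.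
  rewrite ler_pdivrMr ?mul1r ?mulr_gt0 ?exprn_gt0 //.
  apply: hx => //.
have : (dotv w w - x ^+ 2) / b ^+ 2 <= (1 - x ^+ 2) / b ^+ 2.
  apply: ler_wpM2r; first by rewrite invr_ge0 exprn_ge0 // ltW.
  lra.
lra.
Qed.
End Cap.


Section Topo.
Variables (R : realType) (d : nat).
Implicit Types (u v w : 'cV[R]_d) (V : 'M[R]_d).

Lemma cont_lin (N : 'M[R]_d) (q : 'cV[R]_d) i :
  continuous (fun y : 'cV[R]_d => (N *m (y - q)) i 0).
Proof.
have -> : (fun y : 'cV[R]_d => (N *m (y - q)) i 0) =
          (fun y => \sum_(j < d) (N i j * (y j 0 - q j 0))).
  by apply: funext => y; rewrite mxE; apply: eq_bigr => j _; rewrite !mxE.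
apply: continuous_big; first exact: add_continuous.
move=> j _ y; apply: (@continuousM _ _ (fun=> N i j) (fun x : 'cV[R]_d => x j 0 - q j 0)); first exact: cst_continuous.
apply: continuousB; first exact: coord_continuous.
exact: cst_continuous.
Qed.

Lemma cont_nsq (N : 'M[R]_d) (q : 'cV[R]_d) :
  continuous (fun y : 'cV[R]_d => dotv (N *m (y - q)) (N *m (y - q))).
Proof.
apply: continuous_big; first exact: add_continuous.
by move=> i _ y; apply: continuousM; exact: cont_lin.
Qed.

Lemma closed_scaled (b : R) x0 V : V \in unitmx -> closed (scaled b x0 V).
Proof.
move=> hV.
have [b0|b0] := ltP b 0.
  have -> : scaled b x0 V = set0.
    apply/seteqP; split => y //=; rewrite /scaled /= minkE //.
    have := mulr_ge0 (ler0n R d) (enorm_ge0 (invmx V *m (y - x0))); lra.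
  exact: closed0.
have [d0|d0] := eqVneq d 0%N.
  have dR : (d%:R : R) = 0 by rewrite d0.
  have -> : scaled b x0 V = setT.
    by apply/seteqP; split => y //= _; rewrite /scaled /= minkE // dR mul0r.
  exact: closedT.
have dpos : (0 : R) < d%:R by rewrite ltr0n lt0n.
have -> : scaled b x0 V = (fun y => dotv (invmx V *m (y - x0)) (invmx V *m (y - x0)))
             @^-1` [set r | r <= (b / d%:R) ^+ 2].
  apply/seteqP; split => y; rewrite /scaled /= minkE // enormE.
    move=> h; rewrite -(sqr_sqrtr (dotvv_ge0 _)) ler_pXn2r ?nnegrE ?sqrtr_ge0 ?divr_ge0 //.
    by rewrite ler_pdivlMr // mulrC.
  move=> h; rewrite mulrC -ler_pdivlMr //.
  by rewrite -(ler_pXn2r (n:=2)) ?nnegrE ?sqrtr_ge0 ?divr_ge0 // sqr_sqrtr ?dotvv_ge0.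
apply: preimage_closed; last exact: closed_le.
by move=> y _; exact: cont_nsq.
Qed.

End Topo.


Section John.
Variables (R : realType) (d : nat).
Implicit Types (u v w : 'cV[R]_d) (V : 'M[R]_d).

Lemma MVEE_nonempty (C : set 'cV[R]_d) x0 V : (0 < d)%N -> is_MVEE C x0 V -> C !=set0.
Proof.
move=> hd [hV [sub minV]].
case: (pselect (C !=set0)) => // C0.
have h2 : (2^-1 : R) \is a GRing.unit by rewrite unitfE invr_eq0 pnatr_eq0.
have := minV x0 (2^-1 *: V); rewrite unitmxZ // => /(_ hV).
have : C `<=` ellipsoid x0 (2^-1 *: V).
  by move=> y Cy; exfalso; apply: C0; exists y.
move=> S /(_ S); rewrite detZ normrM.
have dV : 0 < `|\det V| by rewrite normr_gt0 -unitfE -unitmxE.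
have : `|(2^-1 : R) ^+ d| < 1.
  rewrite normrX ger0_norm ?invr_ge0 // exprn_ilt1 // ?invr_ge0 ?invf_lt1 //.
  - by rewrite -lt0n.
  - by rewrite (_ : (2:R) = 1 + 1) // ltrDl ltr01.
move=> h1 h2'; exfalso.
have : `|\det V| * 1 <= `|\det V| * `|(2^-1 : R) ^+ d| by rewrite mulr1 mulrC.
rewrite ler_pM2l // => h3.
move: h1; rewrite ltNge h3 //.
Qed.
Lemma john (C : set 'cV[R]_d) x0 V : (0 < d)%N -> Defs.convex_set C -> compact C ->
  is_MVEE C x0 V -> forall u, enorm u <= d%:R^-1 -> C (x0 + V *m u).
Proof.
move=> hd hC cC hE u hu.
have C0 := MVEE_nonempty hd hE.
move: hE => [hV [sub minV]].
case: (pselect (C (x0 + V *m u))) => // nq; exfalso.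
set N := invmx V.
set q := x0 + V *m u.
set f := fun y : 'cV[R]_d => dotv (N *m (y - q)) (N *m (y - q)).
have [p pC pmin] := compact_EVT_min C0 cC (continuous_subspaceT (@cont_nsq R d N q)).
have Cp := set_mem pC.
set pp := N *m (p - x0).
set v := u - pp.
have Nq : N *m (q - x0) = u by rewrite /q addrC addKr mulKmx.
have NyE y : N *m (y - q) = N *m (y - x0) - u.
  by rewrite -Nq -mulmxBr opprB addrA subrK.
have pE : p = x0 + V *m pp by rewrite /pp mulKVmx // addrC subrK.
have v0 : v != 0.
  apply/eqP => v0; apply: nq; suff -> : x0 + V *m u = p by [].
  by rewrite pE; move/eqP: v0; rewrite subr_eq0 => /eqP ->.
have fp : f p = dotv v v.
  rewrite /f NyE -/pp -opprB -/v dotvNl dotvNr opprK //.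
have var y : C y -> dotv v (N *m (y - x0) - pp) <= 0.
  move=> Cy; set h := N *m (y - x0) - pp.
  rewrite leNgt; apply/negP => a0.
  set a := dotv v h in a0.
  set H := dotv h h.
  have H0 : 0 < H.
    rewrite lt_def dotvv_ge0 andbT; apply/eqP => H0.
    move: a0; rewrite /a (dotvv_eq0 H0) dotvC dotv0l ltxx //.
  set lam := Num.min 1 (a / H).
  have lam0 : 0 < lam by rewrite /lam lt_min ltr01 divr_gt0.
  have lam1 : lam <= 1 by rewrite /lam ge_min lexx.
  have lamH : lam <= a / H by rewrite /lam ge_min lexx orbT.
  have Cl : C (lam *: y + (1 - lam) *: p).
    by apply: (hC y p lam Cy Cp); rewrite (ltW lam0) lam1.
  have hle0 := pmin _ (mem_set Cl).
  have E : f (lam *: y + (1 - lam) *: p) = dotv (lam *: h - v) (lam *: h - v).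
    have E1 : N *m (lam *: y + (1 - lam) *: p - x0) - u = lam *: h - v.
      rewrite /h /v /pp /N !(mulmxBr, mulmxDr) -!scalemxAr.
      set Ny := invmx V *m y; set Nx := invmx V *m x0; set Np := invmx V *m p.
      by apply/matrixP => i j; rewrite !mxE; ring.
    by rewrite /f NyE E1.
  have : f p <= f (lam *: y + (1 - lam) *: p) by exact: hle0.
  have key (hh vv : 'cV[R]_d) (l : R) : dotv (l *: hh - vv) (l *: hh - vv) =
      dotv vv vv - 2 * l * dotv vv hh + l ^+ 2 * dotv hh hh.
    rewrite !(dotvBl, dotvBr, dotvZl, dotvZr) (dotvC hh vv); ring.
  rewrite E fp key -/a -/H.
  move=> hle.
  have : 2 * a <= lam * H by nra.
  have : lam * H <= a by rewrite -ler_pdivlMr.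
  lra.
have ev0 : 0 < enorm v.
  by rewrite lt_def enorm_ge0 andbT; apply/eqP => /enorm_eq0 /eqP; rewrite (negbTE v0).
set n := (enorm v)^-1 *: v.
have hn : dotv n n = 1.
  rewrite /n dotvZl dotvZr -enorm_sq; field; exact: lt0r_neq0.
set s := dotv n pp.
have hsep y : C y -> dotv n (N *m (y - x0)) <= s.
  move=> Cy; have h1 := var y Cy; rewrite dotvBr in h1.
  rewrite /s /n !dotvZl; apply: ler_wpM2l; first by rewrite invr_ge0 ltW.
  lra.
have hnu : dotv n u = s + enorm v.
  have -> : dotv n u = dotv n v + dotv n pp by rewrite -dotvDr /v subrK.
  rewrite addrC; congr (_ + _).
  rewrite /n dotvZl -enorm_sq; field; exact: lt0r_neq0.
have en : enorm n = 1 by rewrite enormE hn sqrtr1.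
have hs : d%:R * s < 1.
  have := cauchy_schwarz n u; rewrite en mul1r hnu => h1.
  have dpos : (0:R) < d%:R by rewrite ltr0n.
  have : s < d%:R^-1 by lra.
  by rewrite -(ltr_pM2l dpos) mulfV ?lt0r_neq0.
set s' := Num.max s 0.
have hs0 : 0 <= s' by rewrite /s' le_max lexx orbT.
have hss : s <= s' by rewrite /s' le_max lexx.
have hs' : d%:R * s' < 1.
  rewrite /s'; case: (leP s 0) => _ //; rewrite mulr0 ltr01 //.
have [tau [A [hA dA cont]]] := @cap_ellipsoid R d n s' hd hn hs0 hs'.
have hVA : V *m A \in unitmx by rewrite unitmx_mul hV hA.
have := minV (x0 + V *m (tau *: n)) (V *m A) hVA.
have : C `<=` ellipsoid (x0 + V *m (tau *: n)) (V *m A).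
  move=> y Cy.
  have wy : enorm (N *m (y - x0)) <= 1 by apply/(ellipsoidP _ _ hV); exact: sub.
  have [u' [hu' wE]] := cont _ wy (le_trans (hsep y Cy) hss).
  exists u'; split => //.
  have -> : y = x0 + V *m (N *m (y - x0)) by rewrite mulKVmx // addrC subrK.
  by rewrite wE mulmxDr addrA mulmxA.
move=> S /(_ S); rewrite det_mulmx normrM.
have dV : 0 < `|\det V| by rewrite normr_gt0 -unitfE -unitmxE.
nra.
Qed.
End John.


Section Grid.
Variables (R : realType) (d : nat).
Implicit Types (u v w x y : 'cV[R]_d) (V : 'M[R]_d).

Lemma enormMZ (N : 'M[R]_d) k w : enorm (N *m (k *: w)) = `|k| * enorm (N *m w).
Proof. by rewrite -scalemxAr enormZ. Qed.

Lemma enorm_conv (N : 'M[R]_d) x y x0 (t : R) : 0 <= t <= 1 ->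
  enorm (N *m (t *: x + (1 - t) *: y - x0)) <=
    t * enorm (N *m (x - x0)) + (1 - t) * enorm (N *m (y - x0)).
Proof.
move=> /andP [t0 t1].
have -> : t *: x + (1 - t) *: y - x0 = t *: (x - x0) + (1 - t) *: (y - x0).
  by apply/matrixP => i j; rewrite !mxE; ring.
rewrite mulmxDr; apply: le_trans (enormD _ _) _.
by rewrite -!scalemxAr !enormZ !ger0_norm // subr_ge0.
Qed.

Lemma convex_scaled (b : R) x0 V : V \in unitmx -> Defs.convex_set (scaled b x0 V).
Proof.
move=> hV x y t hx hy ht; rewrite /scaled /= minkE //.
move: hx hy; rewrite /scaled /= !minkE // => hx hy.
have := enorm_conv (invmx V) x y x0 ht.
case/andP: ht => t0 t1.
have D0 : (0:R) <= d%:R by [].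
move=> h; apply: le_trans (ler_wpM2l D0 h) _.
rewrite mulrDr !mulrA (mulrC _ t) (mulrC _ (1 - t)) -!mulrA.
have : t * (d%:R * enorm (invmx V *m (x - x0))) <= t * b by apply: ler_wpM2l.
have : (1 - t) * (d%:R * enorm (invmx V *m (y - x0))) <= (1 - t) * b.
  by apply: ler_wpM2l; rewrite ?subr_ge0.
lra.
Qed.

Lemma convexI (A B : set 'cV[R]_d) : Defs.convex_set A -> Defs.convex_set B ->
  Defs.convex_set (A `&` B).
Proof. by move=> hA hB x y t [ax bx] [ay bY] ht; split; [apply: hA | apply: hB]. Qed.

Lemma grid_center (alpha : R) x1 V1 (M : 'M[R]_d) c : 0 < alpha ->
  grid_map alpha x1 V1 M c -> M *m x1 + c = 0.
Proof.
move=> a0 [hM himg].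
set c' := M *m x1 + c.
have img u : enorm u <= 1 -> enorm (c' + d%:R^-1 *: (M *m (V1 *m u))) <= alpha.
  move=> hu.
  have : [set y | enorm y <= alpha] (M *m (x1 + (d%:R^-1 *: V1) *m u) + c).
    by rewrite -himg; exists (x1 + (d%:R^-1 *: V1) *m u) => //; exists u.
  rewrite /= mulmxDr -scalemxAl -scalemxAr.
  by rewrite (_ : _ + _ + c = c' + d%:R^-1 *: (M *m (V1 *m u))) // /c' addrAC.
have inv e : enorm e <= alpha -> exists u, enorm u <= 1 /\ e = c' + d%:R^-1 *: (M *m (V1 *m u)).
  move=> he.
  have : [set y | enorm y <= alpha] e by [].
  rewrite -himg => -[y [u [hu ->]] <-].
  exists u; split => //.
  by rewrite mulmxDr -scalemxAl -scalemxAr /c' addrAC.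
have [//|hc] := eqVneq c' 0; exfalso.
have ec0 : 0 < enorm c'.
  by rewrite lt_def enorm_ge0 andbT; apply/eqP => /enorm_eq0 /eqP; rewrite (negbTE hc).
set e := (- (alpha / enorm c')) *: c'.
have he : enorm e = alpha.
  rewrite /e enormZ normrN ger0_norm ?divr_ge0 ?ltW //.
  by rewrite -mulrA mulVf ?mulr1 // lt0r_neq0.
have he' : enorm e <= alpha by rewrite he.
have [u [hu eu]] := inv e he'.
have := img (- u); rewrite enormN => /(_ hu).
have -> : c' + d%:R^-1 *: (M *m (V1 *m (- u))) = (2 + alpha / enorm c') *: c'.
  have -> : d%:R^-1 *: (M *m (V1 *m (- u))) = c' - e.
    by rewrite eu !mulmxN scalerN opprD addrA subrr add0r.
  rewrite /e; apply/matrixP => i j; rewrite !mxE; ring.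
rewrite enormZ ger0_norm; last by rewrite addr_ge0 // divr_ge0 // ltW.
rewrite mulrDl -mulrA mulVf ?mulr1 ?lt0r_neq0 //.
lra.
Qed.

End Grid.


Section Grid2.
Variables (R : realType) (d : nat).
Implicit Types (u v w x y : 'cV[R]_d) (V : 'M[R]_d).

Lemma grid_bound (alpha beta : R) V x1 V1 (M : 'M[R]_d) c :
  0 < alpha -> V \in unitmx -> grid_map alpha x1 V1 M c ->
  (forall u, enorm u <= d%:R^-1 -> d%:R * enorm (invmx V *m (V1 *m u)) <= beta) ->
  forall w, alpha * (d%:R * enorm (invmx V *m w)) <= beta * enorm (M *m w).
Proof.
move=> a0 hV hg hB w.
have c0 := grid_center a0 hg.
move: hg => [hM himg].
have inv e : enorm e <= alpha -> exists u, enorm u <= 1 /\ e = M *m (d%:R^-1 *: (V1 *m u)).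
  move=> he.
  have : [set y | enorm y <= alpha] e by [].
  rewrite -himg => -[y [u [hu ->]] <-].
  exists u; split => //.
  by rewrite mulmxDr addrAC c0 add0r -scalemxAl.
have [Mw0|Mw0] := eqVneq (M *m w) 0.
  have w0 : w = 0 by rewrite -(mulKmx hM w) Mw0 mulmx0.
  by rewrite Mw0 w0 mulmx0 !enorm0 !mulr0.
have r0 : 0 < enorm (M *m w).
  by rewrite lt_def enorm_ge0 andbT; apply/eqP => /enorm_eq0 /eqP; rewrite (negbTE Mw0).
set r := enorm (M *m w) in r0 *.
set e := (alpha / r) *: (M *m w).
have he : enorm e <= alpha.
  rewrite /e enormZ ger0_norm; last by rewrite divr_ge0 // ltW.
  rewrite -mulrA mulVf ?mulr1 //; exact: lt0r_neq0.
have [u [hu eu]] := inv e he.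
have wE : (alpha / r) *: w = d%:R^-1 *: (V1 *m u).
  by rewrite -(mulKmx hM ((alpha / r) *: w)) -(mulKmx hM (d%:R^-1 *: (V1 *m u))) -eu /e scalemxAr.
have hd : (0 : R) <= d%:R by [].
have hu' : enorm (d%:R^-1 *: u) <= d%:R^-1.
  rewrite enormZ ger0_norm ?invr_ge0 //.
  by apply: ler_piMr; rewrite ?invr_ge0.
have := hB _ hu'.
rewrite -scalemxAr -wE enormMZ ger0_norm; last by rewrite divr_ge0 // ltW.
move=> h.
have : alpha * (d%:R * enorm (invmx V *m w)) = r * (d%:R * ((alpha / r) * enorm (invmx V *m w))).
  field; exact: lt0r_neq0.
move=> ->; rewrite mulrC; apply: ler_wpM2r; first exact: ltW.
done.
Qed.

Lemma round_vec (e : 'cV[R]_d) : exists p : 'cV[R]_d,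
  (forall i, p i 0 \is a Num.int) /\ dotv (p - e) (p - e) <= d%:R / 4.
Proof.
exists (\col_i ((Num.floor (e i 0 + 2^-1))%:~R)); split.
  by move=> i; rewrite mxE intr_int.
rewrite /dotv.
have -> : d%:R / 4 = \sum_(i < d) (4^-1 : R).
  by rewrite sumr_const card_ord -[RHS]mulr_natr mulrC.
apply: ler_sum => i _; rewrite !mxE.
have := floor_itv (e i 0 + 2^-1).
set f := (Num.floor _)%:~R => /andP [h1 h2].
have h3 : (Num.floor (e i 0 + 2^-1) + 1)%:~R = f + 1 by rewrite intrD.
rewrite h3 in h2.
nra.
Qed.

Lemma grid_round (M : 'M[R]_d) c z : M \in unitmx -> exists xg,
  (forall i, (M *m xg + c) i 0 \is a Num.int) /\
  dotv (M *m (xg - z)) (M *m (xg - z)) <= d%:R / 4.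
Proof.
move=> hM.
have [p [hp hpe]] := round_vec (M *m z + c).
exists (invmx M *m (p - c)); split.
  by move=> i; rewrite mulKVmx // subrK.
have E : M *m (invmx M *m (p - c) - z) = p - (M *m z + c).
  rewrite mulmxBr mulKVmx //; set Mz := M *m z.
  by apply/matrixP => i j; rewrite !mxE; ring.
by rewrite E.
Qed.

End Grid2.

Unset Implicit Arguments. Set Strict Implicit. Set Printing Implicit Defensive.


Theorem mainTheorem2 (R : realType) (d : nat) (hd : (0 < d)%N)
  (K K' : set 'cV[R]_d) (hK : convex_body K) (hK' : convex_body K')
  (hsub : K' `<=` K)
  (beta gamma alpha : R) (hbg : gamma < beta) (hg1 : 1 < gamma)
  (hbd : d%:R < beta)
  (halpha : 2 * (gamma + 1) * beta ^+ 2 * Num.sqrt d%:R <= alpha)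
  (x0 : 'cV[R]_d) (V : 'M[R]_d) (hE : is_MVEE K' x0 V)
  (x1 : 'cV[R]_d) (V1 : 'M[R]_d)
  (hE1 : is_MVEE (scaled beta x0 V `&` K) x1 V1)
  (M : 'M[R]_d) (c : 'cV[R]_d) (hA : grid_map alpha x1 V1 M c) :
  let G := grid_set (scaled beta x0 V `&` K) M c in
  (forall x, K' x -> exists xg, G xg /\
      scaled (2 * beta)^-1 x0 V (xg + gamma *: (xg - x))) /\
  (forall x, K x -> ~ K' x -> exists xg, G xg /\
      scaled (2 * beta)^-1 x0 V (xg + (gamma / mink x0 V x) *: (xg - x))).
Proof.
move=> G; rewrite {}/G.
have [hV [subK' _]] := hE.
have [hM _] := hA.
have D0 : (0 : R) < d%:R by rewrite ltr0n.
have b1 : 1 < beta by lra.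
have sD0 : 0 < Num.sqrt (d%:R : R) by rewrite sqrtr_gt0.
have a0 : 0 < alpha.
  apply: lt_le_trans halpha; rewrite !mulr_gt0 //; lra.
set N := invmx V.
have mkE y : mink x0 V y = d%:R * enorm (N *m (y - x0)) by rewrite minkE.
have JA y : d%:R * enorm (N *m (y - x0)) <= 1 -> K' y.
  move=> hy.
  have hu : enorm (N *m (y - x0)) <= d%:R^-1.
    by rewrite -[_^-1]mulr1 ler_pdivlMl.
  have := john hd hK'.1 hK'.2.1 hE hu.
  by rewrite mulKVmx // addrC subrK.
have convC : Defs.convex_set (scaled beta x0 V `&` K).
  by apply: convexI; [exact: convex_scaled | exact: hK.1].
have compC : compact (scaled beta x0 V `&` K).
  rewrite setIC; apply: compact_closedI hK.2.1 _; exact: closed_scaled.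
have JB u : enorm u <= d%:R^-1 -> d%:R * enorm (N *m (V1 *m u)) <= beta.
  move=> hu.
  have hu' : enorm (- u) <= d%:R^-1 by rewrite enormN.
  have [h1 _] := john hd convC compC hE1 hu.
  have [h2 _] := john hd convC compC hE1 hu'.
  move: h1 h2; rewrite /scaled /= !mkE => h1 h2.
  have E : V1 *m u = 2^-1 *: ((x1 + V1 *m u - x0) - (x1 + V1 *m (- u) - x0)).
    rewrite mulmxN; set a := V1 *m u.
    by apply/matrixP => i j; rewrite !mxE; field.
  rewrite E enormMZ ger0_norm ?invr_ge0 // mulmxBr.
  have := enormB (N *m (x1 + V1 *m u - x0)) (N *m (x1 + V1 *m (- u) - x0)).
  move=> h3.
  have : d%:R * enorm (N *m (x1 + V1 *m u - x0) - N *m (x1 + V1 *m (- u) - x0)) <= 2 * beta.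
    apply: le_trans (ler_wpM2l (ltW D0) h3) _; rewrite mulrDr; lra.
  move=> h4; rewrite mulrA (mulrC _ 2^-1) -mulrA; lra.
have GB := grid_bound a0 hV hA JB.
set Q := 4 * (gamma + 1) * beta.
have Q0 : 0 < Q by rewrite /Q !mulr_gt0 //; lra.
have Round z : exists xg, (forall i, (M *m xg + c) i 0 \is a Num.int) /\
    Q * (d%:R * enorm (N *m (xg - z))) <= 1.
  have [xg [hi hx]] := grid_round c z hM.
  exists xg; split => //.
  set X := d%:R * enorm (N *m (xg - z)).
  have X0 : 0 <= X by rewrite mulr_ge0 ?enorm_ge0 // ltW.
  have e2 : enorm (M *m (xg - z)) <= Num.sqrt d%:R / 2.
    rewrite -(ler_pXn2r (n := 2)) ?nnegrE ?enorm_ge0 ?divr_ge0 ?sqrtr_ge0 //.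
    by rewrite enorm_sq expr_div_n sqr_sqrtr ?ler0n //; lra.
  have h1 := GB (xg - z); rewrite -/X in h1.
  have h2 : alpha * X <= beta * (Num.sqrt d%:R / 2).
    apply: le_trans h1 _; apply: ler_wpM2l => //; lra.
  have h3 : 2 * (gamma + 1) * beta ^+ 2 * Num.sqrt d%:R * X <= alpha * X.
    exact: ler_wpM2r.
  have h4 : (beta * Num.sqrt d%:R) * (Q * X - 1) <= 0.
    rewrite /Q; nra.
  have hp : 0 < beta * Num.sqrt d%:R by rewrite mulr_gt0 //; lra.
  by move: h4; rewrite pmulr_rle0 // subr_le0.
have Kell x : K' x -> d%:R * enorm (N *m (x - x0)) <= d%:R.
  move=> hx; have := subK' x hx; rewrite (ellipsoidP _ _ hV) => h.
  by rewrite -[X in _ <= X]mulr1; apply: ler_wpM2l => //; exact: ltW.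
have Xge0 z : 0 <= d%:R * enorm (N *m z) by rewrite mulr_ge0 ?enorm_ge0 // ltW.
split.
- move=> x hx.
  set z := (1 + gamma)^-1 *: (gamma *: x + x0).
  have [xg [hi hX]] := Round z.
  set X := d%:R * enorm (N *m (xg - z)) in hX.
  have X0 : 0 <= X by exact: Xge0.
  set y := xg + gamma *: (xg - x).
  have Ey : y - x0 = (1 + gamma) *: (xg - z).
    rewrite /y /z; apply/matrixP => i j; rewrite !mxE; field; lra.
  have my : d%:R * enorm (N *m (y - x0)) = (1 + gamma) * X.
    rewrite Ey enormMZ ger0_norm; last lra.
    by rewrite /X mulrCA.
  have QX : Q * X = 4 * beta * ((1 + gamma) * X) by rewrite /Q; ring.
  have my1 : 4 * beta * ((1 + gamma) * X) <= 1 by lra.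
  have gX0 : 0 <= (1 + gamma) * X by rewrite mulr_ge0 //; lra.
  have Ky : K' y by apply: JA; rewrite my; nra.
  set lam := gamma / (1 + gamma).
  have xgE : xg = lam *: x + (1 - lam) *: y.
    rewrite /y /lam; apply/matrixP => i j; rewrite !mxE; field; lra.
  have hlam : 0 <= lam <= 1.
    rewrite /lam divr_ge0 /=; last 2 first; [lra | lra |].
    by rewrite ler_pdivrMr ?mul1r; lra.
  have Kxg : K' xg by rewrite xgE; exact: (hK'.1 x y lam hx Ky hlam).
  exists xg; split; first split; first split.
  + rewrite /scaled /= mkE xgE.
    apply: le_trans (ler_wpM2l (ltW D0) (enorm_conv N x y x0 hlam)) _.
    have hx' := Kell x hx.
    move: hlam => /andP [l0 l1].
    have : d%:R * (lam * enorm (N *m (x - x0)) + (1 - lam) * enorm (N *m (y - x0)))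
        = lam * (d%:R * enorm (N *m (x - x0))) + (1 - lam) * (d%:R * enorm (N *m (y - x0))).
      by ring.
    move=> ->; rewrite my.
    have : lam * (d%:R * enorm (N *m (x - x0))) <= lam * d%:R by apply: ler_wpM2l.
    have : (1 - lam) * ((1 + gamma) * X) <= (1 - lam) * 1.
      by apply: ler_wpM2l; nra.
    nra.
  + exact: hsub.
  + exact: hi.
  + rewrite /scaled /= mkE my -(mulr1 (2 * beta)^-1) ler_pdivlMl; last lra.
    nra.
- move=> x hx nx.
  set m := mink x0 V x.
  have m1 : 1 < m.
    rewrite ltNge; apply/negP => hm; apply: nx; apply: JA; by move: hm; rewrite /m mkE.
  have m0 : 0 < m by lra.
  set t := gamma / m.
  have t0 : 0 < t by rewrite /t divr_gt0 //; lra.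
  have tg : t <= gamma by rewrite /t ler_pdivrMr // ler_peMr //; lra.
  set rho := (4 * beta)^-1.
  have rho0 : 0 < rho by rewrite /rho invr_gt0; lra.
  have rhoE : 4 * beta * rho = 1 by rewrite /rho mulfV //; lra.
  have hr : rho <= 4^-1 by rewrite /rho lef_pV2 ?posrE; lra.
  set ys := x0 - (rho / m) *: (x - x0).
  set z := (1 + t)^-1 *: (t *: x + ys).
  have [xg [hi hX]] := Round z.
  set X := d%:R * enorm (N *m (xg - z)) in hX.
  have X0 : 0 <= X by exact: Xge0.
  set y := xg + t *: (xg - x).
  have Ey : y - x0 = (1 + t) *: (xg - z) - (rho / m) *: (x - x0).
    rewrite /y /z /ys; apply/matrixP => i j; rewrite !mxE; field; lra.
  have mx : d%:R * enorm (N *m (x - x0)) = m by rewrite /m mkE.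
  have my : d%:R * enorm (N *m (y - x0)) <= (1 + t) * X + rho.
    rewrite Ey mulmxBr; apply: le_trans (ler_wpM2l (ltW D0) (enormB _ _)) _.
    rewrite !enormMZ !ger0_norm; last 2 first; [rewrite divr_ge0 //; lra | lra |].
    rewrite mulrDr (mulrCA _ (rho / m)) mx mulfVK; last lra.
    by rewrite /X mulrCA.
  have QX : Q * X = 4 * beta * ((1 + gamma) * X) by rewrite /Q; ring.
  have tX : (1 + t) * X <= (1 + gamma) * X by apply: ler_wpM2r => //; lra.
  have my1 : 4 * beta * ((1 + t) * X) <= 1 by nra.
  have tX0 : 0 <= (1 + t) * X by rewrite mulr_ge0 //; lra.
  have Ky : K' y by apply: JA; apply: le_trans my _; nra.
  set lam := t / (1 + t).
  have xgE : xg = lam *: x + (1 - lam) *: y.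
    rewrite /y /lam; apply/matrixP => i j; rewrite !mxE; field; lra.
  have hlam : 0 <= lam <= 1.
    rewrite /lam divr_ge0 /=; last 2 first; [lra | lra |].
    by rewrite ler_pdivrMr ?mul1r; lra.
  have Kxg : K xg by rewrite xgE; exact: (hK.1 x y lam hx (hsub _ Ky) hlam).
  exists xg; split; first split; first split.
  + rewrite /scaled /= mkE.
    have xgE2 : xg - x0 = ((t - rho / m) / (1 + t)) *: (x - x0) + (xg - z).
      rewrite /z /ys; apply/matrixP => i j; rewrite !mxE; field; lra.
    rewrite xgE2 mulmxDr; apply: le_trans (ler_wpM2l (ltW D0) (enormD _ _)) _.
    rewrite enormMZ mulrDr -/X (mulrCA _ `|_|) mx.
    have tr : 0 < t - rho / m.
      rewrite /t -mulrBl divr_gt0 //; lra.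
    rewrite ger0_norm; last by rewrite divr_ge0 //; lra.
    have -> : (t - rho / m) / (1 + t) * m = (gamma - rho) / (1 + t).
      rewrite /t; field; lra.
    have : (gamma - rho) / (1 + t) <= gamma - rho.
      rewrite ler_pdivrMr; last lra.
      have : 0 <= gamma - rho by lra.
      nra.
    have : X <= rho.
      have : 4 * beta * X <= 1 by nra.
      move=> h; rewrite -(mulr1 rho) /rho ler_pdivlMl; lra.
    lra.
  + exact: Kxg.
  + exact: hi.
  + rewrite /scaled /= mkE -/t -/y.
    apply: le_trans my _.
    rewrite -(mulr1 (2 * beta)^-1) ler_pdivlMl; last lra.
    nra.
Qed.
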